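(* Fix $\lambda_1,\lambda_2,\lambda_3\in\mathbb{Z}_{\ge0}$ and an infinite reduced sequence $\mathbf{w}=[w_1,w_2,\dots]$. Then the ratio number sequence $\{k_j\}_{j\ge1}$ associated with $\mathbf{w}$ is strictly increasing.
   Context: Generalized Markov mutations: $\mu_1(x_1,x_2,x_3)=(\frac{x_2^2+\lambda_1x_2x_3+x_3^2}{x_1},x_2,x_3)$, $\mu_2(x_1,x_2,x_3)=(x_1,\frac{x_1^2+\lambda_2x_1x_3+x_3^2}{x_2},x_3)$, $\mu_3(x_1,x_2,x_3)=(x_1,x_2,\frac{x_1^2+\lambda_3x_1x_2+x_2^2}{x_3})$. A sequence with entries in $\{1,2,3\}$ is reduced if consecutive entries differ. Ratio number sequence: $T_0=(1,1,1)$, $T_j=\mu_{w_j}(T_{j-1})$, and $k_j$ is the $w_j$-th component of $T_j$ divided by the product of the other two components of $T_j$. *)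

(* Defs.v *)
(* values are rationals (the mutation values are positive
   rationals; actually positive integers, but division is taken in rat). *)
From mathcomp Require Import all_boot all_order all_algebra.
Set Implicit Arguments. Unset Strict Implicit. Unset Printing Implicit Defensive.
Import Order.TTheory GRing.Theory Num.Theory.
Local Open Scope ring_scope.

Definition triple := (rat * rat * rat)%type.

Definition mu (l1 l2 l3 : nat) (i : nat) (x : triple) : triple :=
  let: (x1, x2, x3) := x in
  if i == 1%N then ((x2 ^+ 2 + l1%:R * x2 * x3 + x3 ^+ 2) / x1, x2, x3)
  else if i == 2%N then (x1, (x1 ^+ 2 + l2%:R * x1 * x3 + x3 ^+ 2) / x2, x3)
  else if i == 3%N then (x1, x2, (x1 ^+ 2 + l3%:R * x1 * x2 + x2 ^+ 2) / x3)
  else x.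

(* T_0 = (1,1,1), T_j = mu_{w_j}(T_{j-1}); w is indexed from 1 (w 0 unused) *)
Fixpoint Tseq (l1 l2 l3 : nat) (w : nat -> nat) (j : nat) : triple :=
  match j with
  | 0 => (1, 1, 1)
  | j'.+1 => mu l1 l2 l3 (w j) (Tseq l1 l2 l3 w j')
  end.

Definition ratio (i : nat) (x : triple) : rat :=
  let: (x1, x2, x3) := x in
  if i == 1%N then x1 / (x2 * x3)
  else if i == 2%N then x2 / (x1 * x3)
  else x3 / (x1 * x2).

Definition kseq (l1 l2 l3 : nat) (w : nat -> nat) (j : nat) : rat :=
  ratio (w j) (Tseq l1 l2 l3 w j).

(* Main.v *)
Require Import Defs.
From mathcomp Require Import all_boot all_order all_algebra.
From mathcomp Require Import ring lra.
Import Order.TTheory GRing.Theory Num.Theory.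
Local Open Scope ring_scope.

Definition tpos (x : triple) : Prop :=
  let: (a, b, c) := x in 0 < a /\ 0 < b /\ 0 < c.

Lemma quad_pos (a c l : rat) : 0 < a -> 0 < c -> 0 <= l ->
  0 < a ^+ 2 + l * a * c + c ^+ 2.
Proof.
move=> ha hc hl.
have h1 : 0 < a ^+ 2 by rewrite exprn_gt0.
have h2 : 0 < c ^+ 2 by rewrite exprn_gt0.
have h3 : 0 <= l * a * c by rewrite !mulr_ge0 // ltW.
by rewrite -addrA ltr_wpDr // addr_ge0 // ltW.
Qed.

Lemma Tseq_pos l1 l2 l3 w j : tpos (Tseq l1 l2 l3 w j).
Proof.
elim: j => [|j IH] /=; first by rewrite /tpos.
move: IH; case: (Tseq l1 l2 l3 w j) => [[a b] c] [ha [hb hc]].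
rewrite /mu.
case: ifP => _; first by rewrite /= divr_gt0 // quad_pos // ler0n.
case: ifP => _; first by rewrite /= divr_gt0 // quad_pos // ler0n.
case: ifP => _; first by rewrite /= divr_gt0 // quad_pos // ler0n.
by [].
Qed.

Lemma key (A B a b c l : rat) : 0 < a -> 0 < b -> 0 < c -> 0 <= l ->
  A = a / (b * c) -> B = (a ^+ 2 + l * a * c + c ^+ 2) / b / (a * c) -> A < B.
Proof.
move=> ha hb hc hl -> ->.
have -> : (a ^+ 2 + l * a * c + c ^+ 2) / b / (a * c)
   = a / (b * c) + (l / b + c / (a * b)).
  by field; rewrite ?mulf_neq0 // ?gt_eqF.
rewrite ltrDl ltr_wpDl // ?divr_ge0 // ?ltW // divr_gt0 // mulr_gt0 //.
Qed.

Theorem lemma6p1 (l1 l2 l3 : nat) (w : nat -> nat)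
  (hw : forall j : nat, (1 <= j)%N -> (1 <= w j <= 3)%N)
  (hred : forall j : nat, (1 <= j)%N -> w j != w j.+1) :
  forall j : nat, (1 <= j)%N -> kseq l1 l2 l3 w j < kseq l1 l2 l3 w j.+1.
Proof.
move=> j hj.
have h1 := hw j hj.
have h2 := hw j.+1 isT.
have h3 := hred j hj.
rewrite /kseq /=.
have := Tseq_pos l1 l2 l3 w j.
case: (Tseq l1 l2 l3 w j) => [[a b] c] [ha [hb hc]].
have p1 : 0 <= (l1%:R : rat) by rewrite ler0n.
have p2 : 0 <= (l2%:R : rat) by rewrite ler0n.
have p3 : 0 <= (l3%:R : rat) by rewrite ler0n.
move: h1 h2 h3; case: (w j) => [|[|[|[|n]]]] //; case: (w j.+1) => [|[|[|[|m]]]] // _ _ _ /=.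
- by apply: (key _ _ a b c l2%:R) => //; field; rewrite ?mulf_neq0 // ?gt_eqF.
- by apply: (key _ _ a c b l3%:R) => //; field; rewrite ?mulf_neq0 // ?gt_eqF.
- by apply: (key _ _ b a c l1%:R) => //; field; rewrite ?mulf_neq0 // ?gt_eqF.
- by apply: (key _ _ b c a l3%:R) => //; field; rewrite ?mulf_neq0 // ?gt_eqF.
- by apply: (key _ _ c a b l1%:R) => //; field; rewrite ?mulf_neq0 // ?gt_eqF.
- by apply: (key _ _ c b a l2%:R) => //; field; rewrite ?mulf_neq0 // ?gt_eqF.
Qed.
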